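(* Let $0<\omega_1<\omega_2<\cdots$, let $(c_j)$ be a real square-summable sequence with $c_j\ne0$ for all $j$, $\gamma>0$, and $f(\lambda)=\sum_{j}\frac{c_j^2}{\omega_j}\big(\frac1{\lambda-i\omega_j}-\frac1{\lambda+i\omega_j}\big)+\frac{2i}{\gamma\lambda}$. For $k\ge2$ let $F_k(\lambda)=(\lambda-i\omega_k)f(\lambda)$, $\lambda_k^*=i\omega_k-F_k(i\omega_k)/F_k'(i\omega_k)$, and $\rho_k$ be defined by $F_k(\lambda)=F_k(i\omega_k)+(\lambda-i\omega_k)F_k'(i\omega_k)+(\lambda-i\omega_k)^2\rho_k(\lambda)$. Suppose there is $k_1$ such that for every $k\ge k_1$: $\omega_k>1$, $\omega_{k+1}-\omega_k>\omega_k-\omega_{k-1}$, and there are $0<R_1^{(k)}<\omega_k-\omega_{k-1}$ and $R_k>0$ with: $M_k:=\sup_{|\lambda-i\omega_k|\le R_1^{(k)}}|\rho_k(\lambda)|$ satisfies $0<M_k<\frac{\gamma\omega_k|F_k'(i\omega_k)|^3}{c_k^2(\gamma\omega_k|F_k'(i\omega_k)|+1)^2}$; $\sqrt{R_k}\in(b_k-\sqrt{b_k^2-d_k},\,b_k+\sqrt{b_k^2-d_k})$ where $b_k=\sqrt{|F_k'(i\omega_k)|/(4M_k)}$, $d_k=|F_k(i\omega_k)/F_k'(i\omega_k)|$; $R_k\le\frac12|\mathrm{Re}\,\lambda_k^*|$; and $\{|\lambda-\lambda_k^*|<R_k\}\subset\{|\lambda-i\omega_k|\le R_1^{(k)}\}$.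 Let $\lambda_k$ be the unique zero of $f$ in $\{|\lambda-\lambda_k^*|<R_k\}$ (an eigenvalue of the operator $A$ below, as is $\bar\lambda_k$). Then $$\lambda_k=i\omega_k+O(c_k^2),\qquad \bar\lambda_k=-i\omega_k+O(c_k^2)\qquad (k\to\infty).$$
   Context: $A$ is the operator on the complex space $H=\ell^2\times\ell^2$ given by $A(q,p)=(-i\Omega q+\check Aq+\check Ap,\ \check Aq+i\Omega p+\check Ap)$ with $\Omega=\mathrm{diag}(\omega_j)$, $(\check Ax)_j=-\frac\gamma2c_j\sum_\iota c_\iota x_\iota$, domain $\{(q,p):\sum_j\omega_j^2(|q_j|^2+|p_j|^2)<\infty\}$; its eigenvalues off $\{0,\pm i\omega_j\}$ are the zeros of $f$. *)

(* Defs.v *)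
From Stdlib Require Import Reals.
From Coquelicot Require Import Coquelicot.
Open Scope C_scope.

(* Index shift: om j, c j here are the paper's omega_(j+1), c_(j+1). *)

Definition fterm (c om : nat -> R) (j : nat) (z : C) : C :=
  RtoC (c j ^ 2 / om j) * (/ (z - Ci * RtoC (om j)) - / (z + Ci * RtoC (om j))).

Definition CSeries (a : nat -> C) : C :=
  (Series (fun n => Re (a n)), Series (fun n => Im (a n))).

(* f(z) = sum_j fterm j z + 2 i /(gamma z), as a total function (junk at poles). *)
Definition f (c om : nat -> R) (gamma : R) (z : C) : C :=
  CSeries (fun j => fterm c om j z) + 2 * Ci / (RtoC gamma * z).

Definition is_zero_f (c om : nat -> R) (gamma : R) (z : C) : Prop :=
  z <> 0 /\ (forall j, z <> Ci * RtoC (om j) /\ z <> - (Ci * RtoC (om j))) /\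
  exists s : C, @is_series C_AbsRing C_NormedModule (fun j => fterm c om j z) s /\
               s + 2 * Ci / (RtoC gamma * z) = 0.

(* F_k(z) = (z - i omega_k) f(z), written with the removable singularity at
   i omega_k cancelled: (z - i om_k) * c_k^2/om_k * 1/(z - i om_k) = c_k^2/om_k. *)
Definition Fk (c om : nat -> R) (gamma : R) (k : nat) (z : C) : C :=
  RtoC (c k ^ 2 / om k) +
  (z - Ci * RtoC (om k)) *
    (CSeries (fun j => if Nat.eqb j k then 0 else fterm c om j z)
     - RtoC (c k ^ 2 / om k) / (z + Ci * RtoC (om k))
     + 2 * Ci / (RtoC gamma * z)).

(* Main.v *)
Require Import Defs.
From Stdlib Require Import Reals Lra Psatz.
From Coquelicot Require Import Coquelicot.
Open Scope C_scope.

Lemma im_le_Cmod (c : C) : (Rabs (Im c) <= Cmod c)%R.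
Proof.
  pose proof (re_le_Cmod (Ci * c)) as h.
  rewrite Cmod_mult in h. replace (Cmod Ci) with 1%R in h.
  destruct c as [x y]; simpl in *. 
  replace (0 * x - 1 * y)%R with (- y)%R in h by ring. rewrite Rabs_Ropp in h. lra.
  unfold Cmod; simpl. replace (0 * (0 * 1) + 1 * (1 * 1))%R with 1%R by ring. now rewrite sqrt_1.
Qed.

Lemma Re_fterm_imag (c om : nat -> R) j y : Re (fterm c om j (Ci * RtoC y)) = 0%R.
Proof.
  unfold fterm, Cminus, Cplus, Cmult, Cinv, Copp, Ci, RtoC; simpl. unfold Rdiv. ring.
Qed.

Lemma CSeries_re0 (a : nat -> C) : (forall n, Re (a n) = 0%R) -> Re (CSeries a) = 0%R.
Proof.
  intros H. unfold CSeries; simpl. rewrite (Series_ext _ (fun _ => 0%R)) by auto.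
  rewrite (Series_ext _ (fun n => 0 * 0)%R) by (intros; ring). rewrite Series_scal_l. ring.
Qed.

Lemma ReG (c om : nat -> R) (gamma : R) k y : gamma <> 0%R -> y <> 0%R -> (y + om k)%R <> 0%R -> om k <> 0%R ->
  Re (CSeries (fun j => if Nat.eqb j k then 0 else fterm c om j (Ci * RtoC y))
      - RtoC (c k ^ 2 / om k) / (Ci * RtoC y + Ci * RtoC (om k))
      + 2 * Ci / (RtoC gamma * (Ci * RtoC y))) = (2 / (gamma * y))%R.
Proof.
  intros Hg Hy Hy2 Ho.
  assert (HS : Re (CSeries (fun j => if Nat.eqb j k then 0 else fterm c om j (Ci * RtoC y))) = 0%R).
  { apply CSeries_re0. intros n. destruct (Nat.eqb n k). reflexivity. apply Re_fterm_imag. }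
  revert HS. generalize (CSeries (fun j => if Nat.eqb j k then 0 else fterm c om j (Ci * RtoC y))).
  intros [s1 s2] HS. simpl in HS. subst s1.
  unfold Cdiv, Cminus, Cplus, Cmult, Cinv, Copp, Ci, RtoC; simpl. field.
  tauto.
Qed.
Theorem proposition3p3
  (om c : nat -> R) (gamma : R) (k1 : nat)
  (R1 Rk M : nat -> R) (Fp : nat -> C) (rho : nat -> C -> C) (lam : nat -> C) :
  (0 < om O)%R ->
  (forall j, om j < om (S j))%R ->
  ex_series (fun j => c j ^ 2)%R ->
  (forall j, c j <> 0%R) ->
  (0 < gamma)%R ->
  (1 <= k1)%nat ->
  (forall k, (k1 <= k)%nat ->
     let iw := Ci * RtoC (om k) in
     (1 < om k)%R /\
     (om (S k) - om k > om k - om (k - 1)%nat)%R /\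
     (0 < R1 k < om k - om (k - 1)%nat)%R /\
     (0 < Rk k)%R /\
     (* Fp k = F_k'(i omega_k) (complex derivative) *)
     @is_derive C_AbsRing C_NormedModule (Fk c om gamma k) iw (Fp k) /\
     (* rho_k defined by the Taylor remainder identity (continuous at i omega_k) *)
     (forall z, Fk c om gamma k z =
                Fk c om gamma k iw + (z - iw) * Fp k + (z - iw) * (z - iw) * rho k z) /\
     continuous (rho k) iw /\
     (* M k = sup_{|z - i omega_k| <= R1 k} |rho_k z| *)
     is_lub (fun x => exists z, (Cmod (z - iw) <= R1 k)%R /\ x = Cmod (rho k z)) (M k) /\
     (0 < M k)%R /\
     (M k < gamma * om k * Cmod (Fp k) ^ 3
              / (c k ^ 2 * (gamma * om k * Cmod (Fp k) + 1) ^ 2))%R /\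
     (let b := sqrt (Cmod (Fp k) / (4 * M k)) in
      let d := Cmod (Fk c om gamma k iw / Fp k) in
      b - sqrt (b ^ 2 - d) < sqrt (Rk k) < b + sqrt (b ^ 2 - d))%R /\
     (let lstar := iw - Fk c om gamma k iw / Fp k in
      (Rk k <= / 2 * Rabs (Re lstar))%R /\
      (forall z, (Cmod (z - lstar) < Rk k)%R -> (Cmod (z - iw) <= R1 k)%R) /\
      (* lam k : the zero of f in the disc |z - lstar| < Rk k *)
      is_zero_f c om gamma (lam k) /\ (Cmod (lam k - lstar) < Rk k)%R)) ->
  exists C0 : R, exists K : nat, forall k, (K <= k)%nat ->
    (Cmod (lam k - Ci * RtoC (om k)) <= C0 * c k ^ 2)%R /\
    (Cmod (Cconj (lam k) - (- (Ci * RtoC (om k)))) <= C0 * c k ^ 2)%R.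
Proof.
  intros Hom0 Hmono Hser Hc Hg Hk1 H.
  exists (3 * gamma)%R, k1. intros k Hk. specialize (H k Hk). cbv zeta in H.
  destruct H as (Hom1 & _ & [HR1a HR1b] & HRk & _ & Htay & _ & Hlub & HM & _ & _ & Hrk & _ & _ & Hlam).
  set (iw := Ci * RtoC (om k)) in *.
  set (a := (c k ^ 2 / om k)%R).
  assert (Ha : (0 < a)%R).
  { unfold a. apply Rdiv_lt_0_compat; [|lra]. pose proof (Hc k). 
    assert (c k * c k > 0)%R by (destruct (Rlt_dec 0 (c k)); [nra|]; assert (c k < 0)%R by lra; nra). nra. }
  assert (Fiw : Fk c om gamma k iw = RtoC a).
  { unfold Fk. fold iw. fold a. apply injective_projections; simpl; ring. }
  rewrite Fiw in Htay, Hrk, Hlam.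
  destruct (Fp k) as [p1 p2] eqn:EFp.
  set (t := Rmin (R1 k) (Rmin (om k) (/ (2 * gamma * om k * M k)))).
  assert (Ht0 : (0 < t)%R).
  { unfold t. repeat apply Rmin_pos; try lra. apply Rinv_0_lt_compat.
    apply Rmult_lt_0_compat; [|lra]. apply Rmult_lt_0_compat; lra. }
  assert (Ht1 : (t <= R1 k)%R) by apply Rmin_l.
  assert (Ht2 : (t <= om k)%R) by (eapply Rle_trans; [apply Rmin_r|apply Rmin_l]).
  assert (Ht3 : (t * M k <= / (2 * gamma * om k))%R).
  { assert (t <= / (2 * gamma * om k * M k))%R by (eapply Rle_trans; [apply Rmin_r|apply Rmin_r]).
    replace (/ (2 * gamma * om k))%R with (/ (2 * gamma * om k * M k) * M k)%R
      by (field; repeat split; lra).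
    apply Rmult_le_compat_r; lra. }
  set (y := (om k + t)%R).
  set (z := Ci * RtoC y).
  pose proof (Htay z) as Hz.
  assert (Hzi : z - iw = Ci * RtoC t).
  { unfold z, iw, y. apply injective_projections; simpl; ring. }
  assert (HCz : Cmod (z - iw) = t).
  { rewrite Hzi, Cmod_mult, Cmod_Ci, Cmod_R, Rabs_pos_eq; lra. }
  assert (Hrho : (Cmod (rho k z) <= M k)%R).
  { destruct Hlub as [Hub _]. apply Hub. exists z. split; [lra|reflexivity]. }
  pose proof (im_le_Cmod (rho k z)) as Hr2.
  pose proof (ReG c om gamma k y ltac:(lra) ltac:(unfold y; lra) ltac:(unfold y; lra) ltac:(lra)) as HG. fold z iw a in HG.
  unfold Fk at 1 in Hz. fold iw in Hz. fold a in Hz. fold z in Hz. rewrite Hzi in Hz.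
  revert HG Hz Hr2 Hrho.
  generalize (CSeries (fun j => if Nat.eqb j k then 0 else fterm c om j z)
      - RtoC a / (z + iw) + 2 * Ci / (RtoC gamma * z)).
  intros [g1 g2] HG Hz Hr2 Hrho. simpl in HG.
  destruct (rho k z) as [r1 r2]. simpl in Hr2.
  apply (f_equal Im) in Hz. simpl in Hz.
  assert (E : (t * g1 = t * p1 - t * t * r2)%R) by (ring_simplify in Hz; ring_simplify; lra).
  assert (E2 : (g1 = p1 - t * r2)%R).
  { apply Rmult_eq_reg_l with t; [|lra]. rewrite E. ring. }
  assert (Hg1 : (g1 >= / (gamma * om k))%R).
  { rewrite HG. unfold Rdiv. 
    assert (/ (gamma * y) >= / (gamma * (2 * om k)))%R.
    { apply Rle_ge, Rinv_le_contravar. apply Rmult_lt_0_compat; unfold y; lra. apply Rmult_le_compat_l; unfold y; lra. }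
    replace (/ (gamma * (2 * om k)))%R with (/2 * / (gamma * om k))%R in H by (field; lra).
    lra. }
  assert (Hp1 : (p1 >= / (2 * gamma * om k))%R).
  { assert (Rabs r2 <= M k)%R by lra.
    assert (t * (- r2) <= t * M k)%R. { apply Rmult_le_compat_l; [lra|]. 
      eapply Rle_trans; [apply Rle_abs|rewrite Rabs_Ropp; lra]. }
    replace (/ (gamma * om k))%R with (2 * / (2 * gamma * om k))%R in Hg1 by (field; lra).
    lra. }
  assert (Hpos : (0 < / (2 * gamma * om k))%R).
  { apply Rinv_0_lt_compat. apply Rmult_lt_0_compat; [|lra]. lra. }
  assert (HFp : (/ (2 * gamma * om k) <= Cmod (p1, p2))%R).
  { eapply Rle_trans; [|apply re_le_Cmod]. simpl. eapply Rle_trans; [|apply Rle_abs]. lra. }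
  assert (Fpnz : (p1, p2) <> RtoC 0%R).
  { intro E0. rewrite E0 in HFp; rewrite Cmod_0 in HFp. lra. }
  set (d := Cmod (RtoC a / (p1, p2))).
  assert (Hd : (d <= 2 * gamma * c k ^ 2)%R).
  { unfold d. rewrite Cmod_div, Cmod_R, Rabs_pos_eq by (auto; lra).
    unfold Rdiv. 
    assert (/ Cmod (p1, p2) <= 2 * gamma * om k)%R.
    { replace (2 * gamma * om k)%R with (/ / (2 * gamma * om k))%R by (field; lra).
      apply Rinv_le_contravar; lra. }
    replace (2 * gamma * c k ^ 2)%R with (a * (2 * gamma * om k))%R by (unfold a; field; lra).
    apply Rmult_le_compat_l; lra. }
  assert (Hrk2 : (Rk k <= d / 2)%R).
  { assert (Re (iw - RtoC a / (p1, p2)) = (- Re (RtoC a / (p1, p2)))%R) by (unfold iw; simpl; ring).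
    rewrite H, Rabs_Ropp in Hrk. pose proof (re_le_Cmod (RtoC a / (p1, p2))). fold d in H0. lra. }
  assert (Hmain : (Cmod (lam k - iw) <= 3 * gamma * c k ^ 2)%R).
  { replace (lam k - iw) with ((lam k - (iw - RtoC a / (p1, p2))) + - (RtoC a / (p1, p2)))
      by ring.
    eapply Rle_trans; [apply Cmod_triangle|]. rewrite Cmod_opp. fold d. lra. }
  split; [exact Hmain|].
  replace (Cconj (lam k) - - iw) with (Cconj (lam k - iw)).
  rewrite Cmod_conj; exact Hmain.
  unfold iw. apply injective_projections; simpl; ring.
Qed.
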